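(* Let $\phi\in\mathbb{Z}[X]$ have degree at least one, let $x\neq0$ be any root of $\phi$, let $f\in\mathbb{Z}[X^{\pm}]$ and let $a,b\in\mathbb{N}$ with $a\neq b$. If $\phi^2$ divides $X^a-X^bf$, then $a-b=\frac{xf'(x)}{f(x)}$.
   Context: $\mathbb{Z}[X^{\pm}]$ is the ring of integer Laurent polynomials; $f'$ denotes the formal derivative of $f$. *)

(* Defs.v *)
From mathcomp Require Import all_boot all_order all_algebra all_field.
Set Implicit Arguments. Unset Strict Implicit. Unset Printing Implicit Defensive.
Import Order.TTheory GRing.Theory Num.Theory.
Local Open Scope ring_scope.

(* Integer Laurent polynomials Z[X^{+-}]: a pair (g, k) represents g * X^(-k),
   with g : {poly int}.  Equality in Z[X^{+-}] is the relation [leq] below. *)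
Definition laurent := ({poly int} * nat)%type.

Definition leq (f g : laurent) : Prop := f.1 * 'X^(g.2) = g.1 * 'X^(f.2).
Definition lmul (f g : laurent) : laurent := (f.1 * g.1, (f.2 + g.2)%N).
Definition lsub (f g : laurent) : laurent :=
  (f.1 * 'X^(g.2) - g.1 * 'X^(f.2), (f.2 + g.2)%N).
Definition lXn (n : nat) : laurent := ('X^n, 0%N).
Definition lpoly (p : {poly int}) : laurent := (p, 0%N).
Definition ldvd (d f : laurent) : Prop := exists h : laurent, leq f (lmul d h).
(* formal derivative: (g X^-k)' = (X g' - k g) X^-(k+1) *)
Definition lderiv (f : laurent) : laurent := ('X * f.1^`() - f.1 *+ f.2, f.2.+1).
Definition leval (F : fieldType) (f : laurent) (x : F) : F :=
  (map_poly (intr : int -> F) f.1).[x] / x ^+ f.2.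

(* Main.v *)
Require Import Defs.
From mathcomp Require Import all_boot all_order all_algebra all_field.
From mathcomp Require Import ring.
Import Order.TTheory GRing.Theory Num.Theory.
Local Open Scope ring_scope.

Lemma xderXn (F : fieldType) (x : F) n : x * ('X^n)^`().[x] = n%:R * x ^+ n.
Proof.
rewrite derivXn hornerMn hornerXn; case: n => [|n] /=; first by rewrite !mulr0n mulr0 mul0r.
by rewrite mulrnAr -exprS mulr_natl.
Qed.

Lemma aux (F : fieldType) (x y : F) (a b k : nat) : x != 0 -> y != 0 ->
  a%:R - b%:R = x * (((a%:R + k%:R - b%:R) * y - y * k%:R) / x ^+ k.+1) / (y / x ^+ k).
Proof. move=> x0 y0; rewrite exprSr; have : x ^+ k != 0 by rewrite expf_eq0 (negbTE x0) andbF. move: (x ^+ k) => z z0; field; by rewrite y0 x0 z0. Qed.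

Theorem lemma15 (phi : {poly int}) (x : algC) (f : laurent) (a b : nat) :
  (2 <= size phi)%N ->
  x != 0 ->
  root (map_poly (intr : int -> algC) phi) x ->
  a <> b ->
  ldvd (lpoly (phi ^+ 2)) (lsub (lXn a) (lmul (lXn b) f)) ->
  ((a%:Z - b%:Z)%:~R : algC) = x * leval (lderiv f) x / leval f x.
Proof.
case: f => g k _ x0 /rootP rx _ [[h1 m]].
rewrite /leq /lsub /lmul /lXn /lpoly /= !add0n expr0 mulr1 => E.
have E' := congr1 (map_poly (intr : int -> algC)) E.
rewrite !(rmorphM, rmorphB, rmorphXn) /= in E'. rewrite !map_polyX in E'.
set G := map_poly _ g in E'; set Phi := map_poly _ phi in E' rx.
set H := map_poly _ h1 in E'.
rewrite -exprD in E'.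
have ev := congr1 (fun p => p.[x]) E'.
rewrite /= !hornerE rx !mul0r in ev.
have xn0 : forall n, x ^+ n != 0 by move=> n; rewrite expf_eq0 (negbTE x0) andbF.
have e1 : x ^+ (a + k) = x ^+ b * G.[x].
  by move/eqP: ev; rewrite mulf_eq0 (negbTE (xn0 _)) orbF subr_eq0 => /eqP.
have Gx : G.[x] != 0.
  by apply/negP => /eqP Gx0; move: (xn0 (a+k)); rewrite e1 Gx0 mulr0 eqxx.
have dv := congr1 (fun p => x * p^`().[x]) E'.
rewrite /= !derivM !hornerE rx /= !(mul0r, mulr0, add0r, addr0) in dv.
have key : x * ('X^(a + k) - 'X^b * G)^`().[x] =
   x * ('X^(a+k))^`().[x] - x * ('X^b)^`().[x] * G.[x] - x^+b * (x * G^`().[x]).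
  rewrite derivB derivM hornerD hornerN hornerD !hornerM hornerXn; ring.
have key0 : x * ('X^(a + k) - 'X^b * G)^`().[x] = 0.
  move: dv; rewrite e1 subrr mul0r addr0 mulrA => /eqP.
  by rewrite mulf_eq0 (negbTE (xn0 _)) orbF => /eqP.
have key2 : x * G^`().[x] = ((a+k)%:R - b%:R) * G.[x].
  move: key0; rewrite key !xderXn e1 => h.
  have : x^+b * (((a+k)%:R - b%:R) * G.[x] - x * G^`().[x]) = 0 by rewrite -h; ring.
  by move/eqP; rewrite mulf_eq0 (negbTE (xn0 _)) /= subr_eq0 => /eqP ->.
rewrite /leval /lderiv /= !(rmorphB, rmorphM, rmorphMn) /= map_polyX -deriv_map -/G.
rewrite hornerD hornerN hornerMn hornerM hornerX key2.
rewrite (_ : a%:~R = a%:R) // (_ : b%:~R = b%:R) //.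
rewrite natrD.
rewrite -(mulr_natr (G.[x]) k).
exact: (aux _ _ _ a b k x0 Gx).
Qed.
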